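(* In the nonatomic base station association game with cost densities $c_{lj}(\mathbf{m})=g_{lj}c(m_j)$, every Nash equilibrium is Pareto efficient; that is, if $\mathbf{m}$ is a Nash equilibrium there is no congestion profile $\mathbf{m}'$ such that $c_{lk}(\mathbf{m}')\le c_{lj}(\mathbf{m})$ for every class $l$ and all BSs $j,k$ with $m_{lj}>0$ and $m'_{lk}>0$, with strict inequality for at least one such triple $(l,j,k)$.
   Context: Nonatomic model: classes $\mathcal{L}=\{1,\dots,L\}$ of nonatomic mobiles, class $l$ having total mass $M_l>0$, target SINR density $\gamma_l>0$ and power gain $h_{lj}>0$ to BS $j\in\mathcal{N}=\{1,\dots,N\}$; noise power $\sigma^2>0$. A congestion profile is $\mathbf{m}=(m_{lj})$ with $m_{lj}\ge0$, $\sum_j m_{lj}=M_l$. Set $m_j=\sum_l\gamma_l m_{lj}$, $g_{lj}=\gamma_l\sigma^2/h_{lj}$, and $c(z)=1/(1-z)$ for $z<1$, $c(z)=\infty$ for $z\ge1$; $c_{lj}(\mathbf{m})=g_{lj}c(m_j)$. $\mathbf{m}$ is a Nash equilibrium if for all $l,j$, $m_{lj}>0$ implies $c_{lj}(\mathbf{m})\le c_{lk}(\mathbf{m})$ for all $k$. Standing feasibility assumption: $\sum_l\gamma_l M_l<N$. *)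

(* Defs.v *)
From HB Require Import structures.
From mathcomp Require Import all_boot all_order all_algebra.
From mathcomp Require Import constructive_ereal.
Set Implicit Arguments. Unset Strict Implicit. Unset Printing Implicit Defensive.
Import Order.TTheory GRing.Theory Num.Theory.
Local Open Scope ring_scope.
Local Open Scope ereal_scope.

Section Game.
Variables (R : realFieldType) (L N : nat).

(* A profile m : m l j = mass of class l associated to BS j. *)
Definition profile := 'I_L -> 'I_N -> R.

Definition load (gamma : 'I_L -> R) (m : profile) (j : 'I_N) : R :=
  (\sum_(l < L) gamma l * m l j)%R.

Definition gcoef (gamma : 'I_L -> R) (sigma2 : R) (h : 'I_L -> 'I_N -> R)
  (l : 'I_L) (j : 'I_N) : R := (gamma l * sigma2 / h l j)%R.

Definition cfun (z : R) : \bar R :=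
  if (z < 1)%R then ((1 - z)^-1)%:E else +oo.

Definition cost (gamma : 'I_L -> R) (sigma2 : R) (h : 'I_L -> 'I_N -> R)
  (m : profile) (l : 'I_L) (j : 'I_N) : \bar R :=
  (gcoef gamma sigma2 h l j)%:E * cfun (load gamma m j).

Definition is_congestion_profile (M : 'I_L -> R) (m : profile) : Prop :=
  (forall l j, (0 <= m l j)%R) /\ (forall l, (\sum_(j < N) m l j)%R = M l).

Definition is_Nash (M gamma : 'I_L -> R) (sigma2 : R) (h : 'I_L -> 'I_N -> R)
  (m : profile) : Prop :=
  is_congestion_profile M m /\
  forall l j, (0 < m l j)%R ->
    forall k, cost gamma sigma2 h m l j <= cost gamma sigma2 h m l k.

Definition pareto_dominates (M gamma : 'I_L -> R) (sigma2 : R)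
  (h : 'I_L -> 'I_N -> R) (m' m : profile) : Prop :=
  is_congestion_profile M m' /\
  (forall l j k, (0 < m l j)%R -> (0 < m' l k)%R ->
     cost gamma sigma2 h m' l k <= cost gamma sigma2 h m l j) /\
  (exists l j k, [/\ (0 < m l j)%R, (0 < m' l k)%R &
     cost gamma sigma2 h m' l k < cost gamma sigma2 h m l j]).

End Game.

(* Main.v *)
Require Import Defs.
From HB Require Import structures.
From mathcomp Require Import all_boot all_order all_algebra.
From mathcomp Require Import constructive_ereal.
Import Order.TTheory GRing.Theory Num.Theory.
Local Open Scope ring_scope.

Lemma le_costE (R : realFieldType) (g x y : R) : 0 < g -> y < 1 ->
  (g%:E * cfun x <= g%:E * cfun y)%E -> x <= y.
Proof.
move=> g0 y1; rewrite /cfun y1.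
case: ifP => x1; last by rewrite gt0_muley ?lte_fin // leNgt ltey.
rewrite lee_fin ler_pM2l // lef_pV2 ?posrE ?subr_gt0 //.
by rewrite lerD2l lerN2.
Qed.

Lemma lt_costE (R : realFieldType) (g x y : R) : 0 < g -> y < 1 ->
  (g%:E * cfun x < g%:E * cfun y)%E -> x < y.
Proof.
move=> g0 y1 H; rewrite lt_neqAle (@le_costE _ _ _ _ g0 y1 (ltW H)) andbT.
by apply/eqP => exy; move: H; rewrite exy ltxx.
Qed.

Lemma sum_load (R : realFieldType) (L N : nat) (M gamma : 'I_L -> R)
  (m : profile R L N) : is_congestion_profile M m ->
  \sum_(k < N) load gamma m k = \sum_(l < L) gamma l * M l.
Proof.
move=> [_ Hs]; rewrite /load exchange_big /=; apply: eq_bigr => l _.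
by rewrite -mulr_sumr Hs.
Qed.

Lemma load_ge0 (R : realFieldType) (L N : nat) (M gamma : 'I_L -> R)
  (m : profile R L N) : (forall l, 0 < gamma l) -> is_congestion_profile M m ->
  forall k, 0 <= load gamma m k.
Proof.
move=> Hg [Hn _] k; apply: sumr_ge0 => l _; apply: mulr_ge0 => //.
exact: ltW.
Qed.

Lemma load0 (R : realFieldType) (L N : nat) (M gamma : 'I_L -> R)
  (m : profile R L N) (k : 'I_N) : is_congestion_profile M m ->
  (forall l, ~~ (0 < m l k)) -> load gamma m k = 0.
Proof.
move=> [Hn _] H; rewrite /load big1 // => l _.
have -> : m l k = 0 by apply/eqP; rewrite eq_le Hn andbT leNgt H.
by rewrite mulr0.
Qed.

Arguments le_costE {R g x y}.
Arguments lt_costE {R g x y}.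
Arguments sum_load {R L N M gamma m}.
Arguments load_ge0 {R L N M gamma m}.
Arguments load0 {R L N M gamma m k}.

Theorem proposition10 (R : realFieldType) (L N : nat)
  (M gamma : 'I_L -> R) (sigma2 : R) (h : 'I_L -> 'I_N -> R)
  (HM : forall l, 0 < M l) (Hgamma : forall l, 0 < gamma l)
  (Hh : forall l j, 0 < h l j) (Hsigma : 0 < sigma2)
  (Hfeas : \sum_(l < L) gamma l * M l < N%:R)
  (m : profile R L N) :
  is_Nash M gamma sigma2 h m ->
  ~ exists m' : profile R L N, pareto_dominates M gamma sigma2 h m' m.
Proof.
move=> [Hcp HN] [m' [Hcp' [Hle [l0 [j0 [k0 [H1 H2 H3]]]]]]].
have Hg : forall l j, 0 < gcoef gamma sigma2 h l j.
  by move=> l j; rewrite /gcoef !mulr_gt0 ?invr_gt0.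
have Hl1 : forall j, load gamma m j < 1.
  move=> j; rewrite ltNge; apply/negP => Hj.
  case: (pickP (fun l => 0 < m l j)) => [l Hl|Hno]; last first.
    by move: Hj; rewrite (load0 Hcp) ?ler10 // => l; rewrite Hno.
  have Hk : forall k, 1 <= load gamma m k.
    move=> k; rewrite leNgt; apply/negP => Hk.
    have := HN l j Hl k; rewrite /cost /cfun Hk.
    have -> : (load gamma m j < 1) = false by rewrite ltNge Hj.
    rewrite gt0_muley ?lte_fin ?Hg // leye_eq.


  have : \sum_(k < N) (1 : R) <= \sum_(k < N) load gamma m k.
    by apply: ler_sum => k _; apply: Hk.
  rewrite sumr_const card_ord (sum_load Hcp) => Hc.
  by move: (le_lt_trans Hc Hfeas); rewrite ltxx.
have HA : forall k, load gamma m' k <= load gamma m k.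
  move=> k; case: (pickP (fun l => 0 < m' l k)) => [l Hl|Hno]; last first.
    by rewrite (load0 Hcp') ?(load_ge0 Hgamma Hcp) // => l; rewrite Hno.
  have [j Hj] : exists j, 0 < m l j.
    case: (pickP (fun j => 0 < m l j)) => [j Hj|Hno]; first by exists j.
    have := HM l; case: Hcp => Hn Hs; rewrite -Hs big1 ?ltxx // => j _.
    by apply/eqP; rewrite eq_le Hn andbT leNgt Hno.
  apply: (@le_costE _ (gcoef gamma sigma2 h l k)) => //.
  exact: le_trans (Hle l j k Hj Hl) (HN l j Hj k).
have HB : load gamma m' k0 < load gamma m k0.
  apply: (@lt_costE _ (gcoef gamma sigma2 h l0 k0)) => //.
  exact: lt_le_trans H3 (HN l0 j0 H1 k0).
have : \sum_(k < N) load gamma m' k < \sum_(k < N) load gamma m k.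
  rewrite (bigD1 k0) //= [X in _ < X](bigD1 k0) //=.
  by apply: ltr_leD => //; apply: ler_sum => k _; apply: HA.
by rewrite (sum_load Hcp) (sum_load Hcp') ltxx.
Qed.
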